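(* For every field $\mathbb{F}$, all $n,d\ge1$ and every tensor $A:[n]^{2d}\to\mathbb{F}$, we have $\mathcal L_{\mathsf{nc,sm}}(A^\flat)\ge n^{\log_2 d}\,\rho(A)$.
   Context: For $a,b\in\{0,1\}$ and $\alpha\in\{0,1\}^{d-1}$ define the partition $I_{a,\alpha,b}\sqcup J_{a,\alpha,b}=[2d]$ by $I_{a,\alpha,b}=[2d]\cap\{a,\,2+\alpha_1,\,4+\alpha_2,\dots,2d-2+\alpha_{d-1},\,2d+b\}$ and $J_{a,\alpha,b}=[2d]\cap\{1-a,\,3-\alpha_1,\,5-\alpha_2,\dots,2d-1-\alpha_{d-1},\,2d+1-b\}$. For $A:[n]^{2d}\to\mathbb{F}$ and a partition $I\sqcup J=[2d]$, $\mathrm{Mat}_{I,J}(A)$ is the $n^{|I|}\times n^{|J|}$ flattening (rows indexed by coordinates in $I$, columns by those in $J$). $\mathrm{relrk}_{a,\alpha,b}(A)=n^{-d}\mathrm{rank}(\mathrm{Mat}_{I_{a,\alpha,b},J_{a,\alpha,b}}(A))$, and \[\rho(A)=\max_{a,b\in\{0,1\}}\ \min_{\{X_\alpha\}}\ \sum_{\alpha\in\{0,1\}^{d-1}}\mathrm{relrk}_{a,\alpha,b}(X_\alpha),\] the minimum over families of tensors $X_\alpha:[n]^{2d}\to\mathbb{F}$ with $A=\sum_\alpha X_\alpha$. The flattening $A^\flat:[n^2]^d\to\mathbb{F}$ is $A^\flat(\langle a_1,b_1\rangle,\dots,\langle a_d,b_d\rangle)=A(a_1,b_1,\dots,a_d,b_d)$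 with $\langle a,b\rangle=(a-1)n+b$. Non-commutative set-multilinear formula size of $B:[N]^k\to\mathbb{F}$: if $k=1$, $\mathcal L_{\mathsf{nc,sm}}(B)=1$ if $B\ne0$ and $0$ otherwise; if $k\ge2$ it is the minimum of $\sum_i(\mathcal L_{\mathsf{nc,sm}}(B_i)+\mathcal L_{\mathsf{nc,sm}}(C_i))$ over finite families with positive $e_i+f_i=k$, $B_i:[N]^{e_i}\to\mathbb{F}$, $C_i:[N]^{f_i}\to\mathbb{F}$, $B=\sum_iB_i\otimes C_i$ (concatenating coordinates in order). *)

(* Defs.v *)
From HB Require Import structures.
From mathcomp Require Import all_boot all_order all_algebra.
From mathcomp Require Import boolp classical_sets reals exp.
From mathcomp Require Import Rstruct.
Set Implicit Arguments. Unset Strict Implicit. Unset Printing Implicit Defensive.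
Import Order.TTheory GRing.Theory Num.Theory.
Local Open Scope ring_scope.

(* Coordinates are 0-based: [N] = {1..N} is modelled by 'I_N = {0..N-1}.     *)
Definition tensor (F : fieldType) (N k : nat) :=
  {ffun {ffun 'I_k -> 'I_N} -> F}.

(* used only where the minimum is attained.                                   *)
Definition natmin (S : nat -> Prop) : nat :=
  xget 0%N [set m | S m /\ forall m', S m' -> (m <= m')%N].
Definition realmin (S : set Rdefinitions.R) : Rdefinitions.R :=
  xget 0 [set r | S r /\ forall r', S r' -> r <= r'].

(* position p : 'I_(2d) is the (1-based) coordinate p.+1;                     *)
(* alpha : {0,1}^{d-1}, alpha_{j+1} = alpha j for j : 'I_(d-1).               *)
Definition Iset (d : nat) (a : bool) (alpha : {ffun 'I_d.-1 -> bool}) (b : bool)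
  : {set 'I_(2 * d)} :=
  [set p : 'I_(2 * d) | [|| p.+1 == (a : nat),
                           [exists j : 'I_d.-1, p.+1 == (2 * j.+1 + alpha j)%N]
                         | p.+1 == (2 * d + b)%N]].

Definition Jset (d : nat) (a : bool) (alpha : {ffun 'I_d.-1 -> bool}) (b : bool)
  : {set 'I_(2 * d)} :=
  [set p : 'I_(2 * d) | [|| p.+1 == (1 - a)%N,
                           [exists j : 'I_d.-1, p.+1 == (3 + 2 * j - alpha j)%N]
                         | p.+1 == (2 * d + 1 - b)%N]].

(* Rows are indexed by the n^|I| assignments of the coordinates in I, columns *)
(* by the n^|J| assignments of the coordinates in J.  The entry (x, y) is     *)
(* A evaluated at the index z agreeing with x on I and with y on J (written   *)
(* as the sum over all such z, which is a single term since I |_| J = [m]).   *)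
Definition rowT (n m : nat) (I : {set 'I_m}) :=
  {ffun {p : 'I_m | p \in I} -> 'I_n}.

Definition Mat (F : fieldType) (n m : nat) (I J : {set 'I_m}) (A : tensor F n m)
  : 'M[F]_(#|{: rowT n I}|, #|{: rowT n J}|) :=
  \matrix_(i, j)
    \sum_(z : {ffun 'I_m -> 'I_n} |
          [forall q : {p : 'I_m | p \in I}, z (val q) == (enum_val i : rowT n I) q] &&
          [forall q : {p : 'I_m | p \in J}, z (val q) == (enum_val j : rowT n J) q]) A z.

Definition relrk (F : fieldType) (n d : nat) (a : bool)
  (alpha : {ffun 'I_d.-1 -> bool}) (b : bool) (A : tensor F n (2 * d))
  : Rdefinitions.R :=
  (\rank (Mat (Iset a alpha b) (Jset a alpha b) A))%:R / (n%:R ^+ d).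

Definition rho_ab (F : fieldType) (n d : nat) (a b : bool) (A : tensor F n (2 * d))
  : Rdefinitions.R :=
  realmin [set r | exists X : {ffun 'I_d.-1 -> bool} -> tensor F n (2 * d),
                     A = \sum_alpha X alpha /\
                     r = \sum_alpha relrk a alpha b (X alpha)].

Definition rho (F : fieldType) (n d : nat) (A : tensor F n (2 * d)) : Rdefinitions.R :=
  Num.max (Num.max (rho_ab false false A) (rho_ab false true A))
          (Num.max (rho_ab true false A) (rho_ab true true A)).

(* 0-based pairing <a,b> = a * n + b (the 1-based (a-1)n+b); we invert it.    *)
Lemma ord_sq_pos (n : nat) (y : 'I_(n * n)) : (0 < n)%N.
Proof. case: n y => [|n] [y Hy] //. Qed.

Lemma ord_mod_lt (n : nat) (y : 'I_(n * n)) : (y %% n < n)%N.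
Proof. by rewrite ltn_mod (ord_sq_pos y). Qed.

Lemma ord_div_lt (n : nat) (y : 'I_(n * n)) : (y %/ n < n)%N.
Proof. by rewrite ltn_divLR ?(ord_sq_pos y). Qed.

Lemma half_lt (d : nat) (p : 'I_(2 * d)) : (p./2 < d)%N.
Proof. case: p => p Hp /=; rewrite -divn2 ltn_divLR // mulnC //. Qed.

Definition pair_fst (n : nat) (y : 'I_(n * n)) : 'I_n := Ordinal (ord_div_lt y).
Definition pair_snd (n : nat) (y : 'I_(n * n)) : 'I_n := Ordinal (ord_mod_lt y).
Definition half_ord (d : nat) (p : 'I_(2 * d)) : 'I_d := Ordinal (half_lt p).

Definition flat (F : fieldType) (n d : nat) (A : tensor F n (2 * d))
  : tensor F (n * n) d :=
  [ffun y : {ffun 'I_d -> 'I_(n * n)} =>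
     A [ffun p : 'I_(2 * d) =>
          if odd p then pair_snd (y (half_ord p)) else pair_fst (y (half_ord p))]].

Definition tprod (F : fieldType) (N e f k : nat) (H : (e + f)%N = k)
  (B : tensor F N e) (C : tensor F N f) : tensor F N k :=
  [ffun x : {ffun 'I_k -> 'I_N} =>
     B [ffun i : 'I_e => x (cast_ord H (lshift f i))] *
     C [ffun j : 'I_f => x (cast_ord H (rshift e j))]].

(* sm_size B s : s is the value sum_i (s_i + t_i) of some admissible         *)
(* decomposition (recursively), i.e. s is one of the quantities over which    *)
(* the recursive minimum defining L_{nc,sm}(B) is taken;                      *)
Inductive sm_size (F : fieldType) (N : nat) : forall k, tensor F N k -> nat -> Prop :=
| sm_one : forall B : tensor F N 1, sm_size B (B != 0)
| sm_many : forall k (B : tensor F N k) s, (2 <= k)%N -> sm_fam B s -> sm_size B s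
with sm_fam (F : fieldType) (N : nat) : forall k, tensor F N k -> nat -> Prop :=
| fam_nil : forall k, sm_fam (0 : tensor F N k) 0
| fam_cons : forall k e f (H : (e + f)%N = k) (B : tensor F N e) (C : tensor F N f)
               sB sC (T : tensor F N k) s,
    (0 < e)%N -> (0 < f)%N -> sm_size B sB -> sm_size C sC -> sm_fam T s ->
    sm_fam (T + tprod H B C) (sB + sC + s).

Definition Lncsm (F : fieldType) (N k : nat) (B : tensor F N k) : nat :=
  natmin (sm_size B).

(* Main.v *)
Require Import Defs.
From HB Require Import structures.
From mathcomp Require Import all_boot all_order all_algebra.
From mathcomp Require Import boolp classical_sets reals exp.
From mathcomp Require Import Rstruct.
From mathcomp Require Import zify ring lra.
Set Implicit Arguments. Unset Strict Implicit. Unset Printing Implicit Defensive.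
Import Order.TTheory GRing.Theory Num.Theory.
Local Open Scope ring_scope.

Definition fn (m : nat) (al : {ffun 'I_m -> bool}) (i : nat) : bool :=
  if @insub nat (fun i => (i < m)%N) 'I_m i is Some j then al j else false.

Lemma fnE m (al : {ffun 'I_m -> bool}) (j : 'I_m) : fn al j = al j.
Proof. by rewrite /fn valK. Qed.

Lemma fnE' m (al : {ffun 'I_m -> bool}) i (h : (i < m)%N) : fn al i = al (Ordinal h).
Proof. by rewrite -(fnE al (Ordinal h)). Qed.

Definition extb (d : nat) (a : bool) (al : {ffun 'I_d.-1 -> bool}) (b : bool) (t : nat) : bool :=
  if t == 0%N then a else if t == d then b else fn al t.-1.

Lemma decomp2 q : exists h (o : bool), q = (2 * h + o)%N.
Proof. exists q./2, (odd q); rewrite -[in LHS](odd_double_half q) -muln2; lia. Qed.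

Lemma odd2 h (o : bool) : odd (2 * h + o) = o.
Proof. by rewrite oddD oddM /=; case: o. Qed.

Lemma half2 h (o : bool) : uphalf (2 * h + o) = (h + o)%N.
Proof. rewrite uphalfE -divn2; destruct o; simpl in *; lia. Qed.

Lemma IsetE d a al b (p : 'I_(2 * d)) :
  (p \in Iset a al b) = (extb a al b (p.+1)./2 == ~~ odd p).
Proof.
rewrite inE /extb; case: p => q /= hq.
have hd : (0 < d)%N by lia.
have [h [o eq]] := decomp2 q; subst q; rewrite odd2 half2.
have [q0|q0] := eqVneq (h + o)%N 0%N.
  have [-> ->] : h = 0%N /\ o = false by destruct o; simpl in *; lia.
  rewrite /=; have -> : [exists j : 'I_d.-1, 1%N == (2 * j.+1 + al j)%N] = false.
    by apply/existsP => -[j]; case: (al j) => /=; lia.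
  have -> : (1 == 2 * d + b)%N = false by case: b => /=; lia.
  by case: a.
have [hqd|hqd] := eqVneq (h + o)%N d.
  have ho : o = true by destruct o; simpl in *; lia.
  rewrite ho in hqd hq *.
  have -> : ((2 * h + true).+1 == a) = false by case: a => /=; lia.
  have -> : [exists j : 'I_d.-1, (2 * h + true).+1 == (2 * j.+1 + al j)%N] = false.
    by apply/existsP => -[j /eqP]; have := ltn_ord j; case: (al j) => /=; lia.
  by case: b => /=; lia.
rewrite ?(negbTE q0) ?(negbTE hqd) /=.
have -> : ((2 * h + o).+1 == a) = false by destruct a; destruct o; simpl in *; lia.
have -> : ((2 * h + o).+1 == 2 * d + b)%N = false by destruct b; destruct o; simpl in *; lia.
rewrite orbF /=.
have hj : ((h + o).-1 < d.-1)%N by destruct o; simpl in *; lia.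
apply/existsP/idP.
  move=> [j /eqP hjq].
  have hjv : val j = (h + o).-1 by move: hjq; case: (al j); destruct o => /= ?; lia.
  rewrite (fnE' al hj) (_ : Ordinal hj = j); last exact: val_inj.
  by move: hjq; case: (al j); destruct o => //= ?; exfalso; lia.
move=> /eqP hal; exists (Ordinal hj); apply/eqP => /=.
rewrite -(fnE' al hj) hal; destruct o; simpl in *; lia.
Qed.

Lemma JsetE d a al b (p : 'I_(2 * d)) :
  (p \in Jset a al b) = (extb a al b (p.+1)./2 == odd p).
Proof.
rewrite inE /extb; case: p => q /= hq.
have hd : (0 < d)%N by lia.
have [h [o eq]] := decomp2 q; subst q; rewrite odd2 half2.
have [q0|q0] := eqVneq (h + o)%N 0%N.
  have [-> ->] : h = 0%N /\ o = false by destruct o; simpl in *; lia.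
  rewrite /=; have -> : [exists j : 'I_d.-1, 1%N == (3 + 2 * j - al j)%N] = false.
    by apply/existsP => -[j]; case: (al j) => /=; lia.
  have -> : (1 == 2 * d + 1 - b)%N = false by case: b => /=; lia.
  by case: a.
have [hqd|hqd] := eqVneq (h + o)%N d.
  have ho : o = true by destruct o; simpl in *; lia.
  rewrite ho in hqd hq *.
  have -> : ((2 * h + true).+1 == 1 - a)%N = false by case: a => /=; lia.
  have -> : [exists j : 'I_d.-1, (2 * h + true).+1 == (3 + 2 * j - al j)%N] = false.
    by apply/existsP => -[j /eqP]; have := ltn_ord j; case: (al j) => /=; lia.
  by case: b => /=; lia.
rewrite ?(negbTE q0) ?(negbTE hqd) /=.
have -> : ((2 * h + o).+1 == 1 - a)%N = false by destruct a; destruct o; simpl in *; lia.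
have -> : ((2 * h + o).+1 == 2 * d + 1 - b)%N = false by destruct b; destruct o; simpl in *; lia.
rewrite orbF /=.
have hj : ((h + o).-1 < d.-1)%N by destruct o; simpl in *; lia.
apply/existsP/idP.
  move=> [j /eqP hjq].
  have hjv : val j = (h + o).-1 by move: hjq; case: (al j); destruct o => /= ?; lia.
  rewrite (fnE' al hj) (_ : Ordinal hj = j); last exact: val_inj.
  by move: hjq; case: (al j); destruct o => //= ?; exfalso; lia.
move=> /eqP hal; exists (Ordinal hj); apply/eqP => /=.
rewrite -(fnE' al hj) hal; destruct o; simpl in *; lia.
Qed.

Lemma JsetC d a al b : Jset (d:=d) a al b = ~: Iset a al b.
Proof. by apply/setP => p; rewrite JsetE finset.in_setC IsetE; case: (extb _ _ _ _); case: (odd p). Qed.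

Lemma sum_pairs (E : nat -> bool) m : (0 < m)%N ->
  (\sum_(0 <= q < 2 * m) (E (uphalf q) == ~~ odd q : nat) = E 0%N + m.-1 + ~~ E m)%N.
Proof.
elim: m => // m IH _.
have -> : (2 * m.+1 = (2 * m).+1.+1)%N by lia.
rewrite !big_nat_recr //.
have e1 : uphalf (2 * m) = m by rewrite uphalfE -divn2; lia.
have e2 : uphalf (2 * m).+1 = m.+1 by rewrite uphalfE -divn2; lia.
have o1 : odd (2 * m) = false by rewrite oddM.
rewrite e1 e2 o1 /=.
case: m IH e1 e2 o1 => [|m] IH _ _ _.
  by rewrite big_nil /=; case: (E 0%N); case: (E 1%N).
rewrite IH //=; case: (E m.+1); case: (E m.+2); case: (E 0%N) => /=; lia.
Qed.

Lemma card_Iset d a al b : (0 < d)%N ->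
  #|Iset (d:=d) a al b| = (a + d.-1 + ~~ b)%N.
Proof.
move=> hd.
rewrite -sum1_card big_mkcond /=.
rewrite (eq_bigr (fun p : 'I_(2 * d) => (extb a al b (uphalf p) == ~~ odd p : nat))); last first.
  by move=> p _; rewrite IsetE; case: (_ == _).
rewrite -(big_mkord xpredT (fun q => (extb a al b (uphalf q) == ~~ odd q : nat))).
rewrite sum_pairs // /extb /= eqxx.
by rewrite (negbTE (lt0n_neq0 hd)).
Qed.

Definition join (e f k : nat) (be : {ffun 'I_e.-1 -> bool}) (c : bool)
  (ga : {ffun 'I_f.-1 -> bool}) : {ffun 'I_k.-1 -> bool} :=
  [ffun j : 'I_k.-1 => if (j < e.-1)%N then fn be j
                       else if j == e.-1 :> nat then c else fn ga (j - e)].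

Definition splitB (e k : nat) (al : {ffun 'I_k.-1 -> bool}) : {ffun 'I_e.-1 -> bool} :=
  [ffun j : 'I_e.-1 => fn al j].
Definition splitC (e f k : nat) (al : {ffun 'I_k.-1 -> bool}) : {ffun 'I_f.-1 -> bool} :=
  [ffun j : 'I_f.-1 => fn al (j + e)].

Section JoinS.
Variables (e f k : nat) (H : (e + f)%N = k) (he : (0 < e)%N) (hf : (0 < f)%N).

Lemma fn_join (be : {ffun 'I_e.-1 -> bool}) c (ga : {ffun 'I_f.-1 -> bool}) i :
  (i < k.-1)%N ->
  fn (join k be c ga) i =
    if (i < e.-1)%N then fn be i else if i == e.-1 then c else fn ga (i - e).
Proof. by move=> hi; rewrite (fnE' _ hi) ffunE. Qed.

Lemma fn_out m (al : {ffun 'I_m -> bool}) i : (m <= i)%N -> fn al i = false.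
Proof. by move=> hi; rewrite /fn insubN // -leqNgt. Qed.

Lemma extb_joinL a b (be : {ffun 'I_e.-1 -> bool}) (c : bool) (ga : {ffun 'I_f.-1 -> bool}) t : (t <= e)%N ->
  extb (d:=k) a (join k be c ga) b t = extb (d:=e) a be c t.
Proof.
move=> ht; rewrite /extb.
have [t0|t0] := eqVneq t 0%N; first by [].
have -> : (t == k) = false by apply/negbTE; lia.
rewrite fn_join; last by lia.
have [->|te] := eqVneq t e.
  by rewrite eqxx ltnn.
have -> : (t.-1 < e.-1)%N by lia.
done.
Qed.

Lemma extb_joinR a b (be : {ffun 'I_e.-1 -> bool}) (c : bool) (ga : {ffun 'I_f.-1 -> bool}) t : (t <= f)%N ->
  extb (d:=k) a (join k be c ga) b (e + t) = extb (d:=f) c ga b t.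
Proof.
move=> ht; rewrite /extb.
have -> : (e + t == 0)%N = false by apply/negbTE; lia.
have [->|t0] := eqVneq t 0%N.
  have -> : (e + 0 == k)%N = false by apply/negbTE; lia.
  rewrite fn_join; last by lia.
  by rewrite addn0 ltnn eqxx.
have [->|tf] := eqVneq t f; first by rewrite H eqxx.
have -> : (e + t == k)%N = false by apply/negbTE; lia.
rewrite fn_join; last by lia.
have -> : ((e + t).-1 < e.-1)%N = false by apply/negbTE; lia.
have -> : ((e + t).-1 == e.-1) = false by apply/negbTE; lia.
by congr (fn ga _); lia.
Qed.

Lemma splitB_join (be : {ffun 'I_e.-1 -> bool}) (c : bool) (ga : {ffun 'I_f.-1 -> bool}) : splitB e (join k be c ga) = be.
Proof.
apply/ffunP => j; rewrite ffunE fn_join; last by have := ltn_ord j; lia.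
by rewrite ltn_ord fnE.
Qed.

Lemma splitC_join (be : {ffun 'I_e.-1 -> bool}) (c : bool) (ga : {ffun 'I_f.-1 -> bool}) : splitC e f (join k be c ga) = ga.
Proof.
apply/ffunP => j; rewrite ffunE fn_join; last by have := ltn_ord j; lia.
have -> : (j + e < e.-1)%N = false by apply/negbTE; lia.
have -> : (j + e == e.-1)%N = false by apply/negbTE; lia.
by rewrite addnK fnE.
Qed.

Lemma join_split (al : {ffun 'I_k.-1 -> bool}) c : fn al e.-1 = c ->
  join k (splitB e al) c (splitC e f al) = al.
Proof.
move=> hc; apply/ffunP => j; rewrite ffunE.
case: ifP => h1; first by rewrite (fnE' _ h1) ffunE fnE.
case: ifP => h2; first by rewrite -hc -(eqP h2) fnE.
have hj : (j - e < f.-1)%N by have := ltn_ord j; lia.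
rewrite (fnE' _ hj) ffunE subnK; last by lia.
by rewrite fnE.
Qed.

Lemma IsetL a b (be : {ffun 'I_e.-1 -> bool}) (c : bool) (ga : {ffun 'I_f.-1 -> bool}) (H2 : (2 * e + 2 * f)%N = (2 * k)%N) (p : 'I_(2 * e)) :
  (cast_ord H2 (lshift (2 * f) p) \in Iset (d:=k) a (join k be c ga) b)
  = (p \in Iset (d:=e) a be c).
Proof.
rewrite !IsetE /= extb_joinL //.
rewrite uphalfE -divn2; have := ltn_ord p; lia.
Qed.

Lemma IsetR a b (be : {ffun 'I_e.-1 -> bool}) (c : bool) (ga : {ffun 'I_f.-1 -> bool}) (H2 : (2 * e + 2 * f)%N = (2 * k)%N) (p : 'I_(2 * f)) :
  (cast_ord H2 (rshift (2 * e) p) \in Iset (d:=k) a (join k be c ga) b)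
  = (p \in Iset (d:=f) c ga b).
Proof.
rewrite !IsetE /=.
have -> : uphalf (2 * e + p) = (e + uphalf p)%N by rewrite !uphalfE -!divn2; lia.
rewrite extb_joinR; last by rewrite uphalfE -divn2; have := ltn_ord p; lia.
by rewrite oddD oddM.
Qed.

End JoinS.

Section MatS.
Variables (F : fieldType) (n' : nat).
Local Notation n := n'.+1.

Definition extf m (I : {set 'I_m}) (x : rowT n I) : {ffun 'I_m -> 'I_n} :=
  [ffun p => if (insub p : option {p : 'I_m | p \in I}) is Some q then x q else ord0].

Lemma extfE m (I : {set 'I_m}) (x : rowT n I) (q : {p : 'I_m | p \in I}) :
  extf x (val q) = x q.
Proof. by rewrite ffunE valK. Qed.

Lemma extfE' m (I : {set 'I_m}) (x : rowT n I) p (h : p \in I) :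
  extf x p = x (exist _ p h).
Proof. by rewrite -(extfE x (exist _ p h)). Qed.

Definition glue m (I J : {set 'I_m}) (x : rowT n I) (y : rowT n J) : {ffun 'I_m -> 'I_n} :=
  [ffun p => if p \in I then extf x p else extf y p].

Lemma glueE m (I J : {set 'I_m}) (x : rowT n I) (y : rowT n J) p :
  glue x y p = if p \in I then extf x p else extf y p.
Proof. by rewrite ffunE. Qed.

Lemma Mat_glue m (I : {set 'I_m}) (A : tensor F n m) i j :
  Mat I (~: I) A i j = A (glue (enum_val i) (enum_val j)).
Proof.
rewrite mxE; apply: big_pred1 => z /=.
set x := enum_val i; set y := enum_val j.
apply/andP/eqP.
  move=> [/forallP hx /forallP hy]; apply/ffunP => p; rewrite ffunE.
  case: ifP => hp.
    by rewrite (extfE' x hp); exact/eqP/(hx (exist _ p hp)).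
  have hp' : p \in ~: I by rewrite finset.in_setC hp.
  by rewrite (extfE' y hp'); exact/eqP/(hy (exist _ p hp')).
move=> ->; split; apply/forallP => q; rewrite ffunE.
  by rewrite (valP q) extfE.
have := valP q; rewrite finset.in_setC => /negbTE ->.
by rewrite extfE.
Qed.

Lemma rank_factor (m p : nat) (T : finType) (f : 'I_m -> T -> F) (g : T -> 'I_p -> F) :
  (\rank (\matrix_(i < m, j < p) (\sum_(t : T) f i t * g t j)%R) <= #|T|)%N.
Proof.
set P := \matrix_(i < m, t < #|T|) f i (enum_val t).
set Q := \matrix_(t < #|T|, j < p) g (enum_val t) j.
have -> : \matrix_(i < m, j < p) (\sum_(t : T) f i t * g t j)%R = P *m Q.
  apply/matrixP => i j; rewrite !mxE.
  rewrite (reindex (@enum_val T (mem T))); last exact: onW_bij (enum_val_bij T).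
  by apply: eq_bigr => t _; rewrite !mxE.
exact: leq_trans (mxrankM_maxl P Q) (rank_leq_col P).
Qed.


Lemma mkpair_lt (u v : 'I_n) : (u * n + v < n * n)%N.
Proof. have := ltn_ord u; have := ltn_ord v; nia. Qed.
Definition mkpair (u v : 'I_n) : 'I_(n * n) := Ordinal (mkpair_lt u v).

Lemma dbl_lt k (i : 'I_k) : (2 * i < 2 * k)%N.
Proof. have := ltn_ord i; lia. Qed.
Lemma dbl1_lt k (i : 'I_k) : (2 * i + 1 < 2 * k)%N.
Proof. have := ltn_ord i; lia. Qed.
Definition dbl k (i : 'I_k) : 'I_(2 * k) := Ordinal (dbl_lt i).
Definition dbl1 k (i : 'I_k) : 'I_(2 * k) := Ordinal (dbl1_lt i).

Definition unflat k (B : tensor F (n * n) k) : tensor F n (2 * k) :=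
  [ffun z : {ffun 'I_(2 * k) -> 'I_n} =>
     B [ffun i : 'I_k => mkpair (z (dbl i)) (z (dbl1 i))]].

Lemma unflat_flat d (A : tensor F n (2 * d)) : unflat (flat A) = A.
Proof.
apply/ffunP => z; rewrite !ffunE; congr (A _); apply/ffunP => p; rewrite !ffunE.
have hp := odd_double_half p.
case: ifP => ho; apply/val_inj => /=.
  rewrite modnMDl modn_small //; congr (val (z _)); apply/val_inj => /=.
  rewrite ho /= in hp; rewrite -muln2 in hp; lia.
rewrite divnMDl // divn_small // addn0; congr (val (z _)); apply/val_inj => /=.
rewrite ho /= in hp; rewrite -muln2 in hp; lia.
Qed.

Lemma unflatD k (B C : tensor F (n * n) k) : unflat (B + C) = unflat B + unflat C.
Proof. by apply/ffunP => z; rewrite !ffunE. Qed.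

Lemma unflat0 k : unflat (0 : tensor F (n * n) k) = 0.
Proof. by apply/ffunP => z; rewrite !ffunE. Qed.

Lemma unflat_tprod e f k (H : (e + f)%N = k) (H2 : (2 * e + 2 * f)%N = (2 * k)%N)
  (B : tensor F (n * n) e) (C : tensor F (n * n) f) :
  unflat (tprod H B C) = tprod H2 (unflat B) (unflat C).
Proof.
apply/ffunP => z; rewrite !ffunE; congr (B _ * C _); apply/ffunP => i; rewrite !ffunE;
  congr mkpair; rewrite ?ffunE; congr (z _); apply/val_inj => /=; lia.
Qed.

Lemma tprod_sum (I1 I2 : finType) N e f k (H : (e + f)%N = k)
  (X : I1 -> tensor F N e) (Y : I2 -> tensor F N f) :
  tprod H (\sum_i X i) (\sum_j Y j) = \sum_i \sum_j tprod H (X i) (Y j).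
Proof.
apply/ffunP => z; rewrite !ffunE !sum_ffunE big_distrlr /=.
by apply: eq_bigr => i _; rewrite sum_ffunE; apply: eq_bigr => j _; rewrite ffunE.
Qed.

End MatS.

Section RankProd.
Variables (F : fieldType) (n' : nat).
Local Notation n := n'.+1.
Variables (e f k : nat) (H : (e + f)%N = k) (he : (0 < e)%N) (hf : (0 < f)%N)
  (H2 : (2 * e + 2 * f)%N = (2 * k)%N).

Lemma rank_tprod a b (be : {ffun 'I_e.-1 -> bool}) (c : bool) (ga : {ffun 'I_f.-1 -> bool})
  (X : tensor F n (2 * e)) (Y : tensor F n (2 * f)) :
  (\rank (Mat (Iset (d:=k) a (join k be c ga) b) (~: Iset (d:=k) a (join k be c ga) b) (tprod H2 X Y))
   <= \rank (Mat (Iset (d:=e) a be c) (~: Iset (d:=e) a be c) X) *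
      \rank (Mat (Iset (d:=f) c ga b) (~: Iset (d:=f) c ga b) Y))%N.
Proof.
set I := Iset (d:=k) a (join k be c ga) b.
set IB := Iset (d:=e) a be c.
set IC := Iset (d:=f) c ga b.
set MX := Mat IB (~: IB) X; set MY := Mat IC (~: IC) Y.
pose resB (x : rowT n I) : rowT n IB :=
  [ffun q : {p : 'I_(2 * e) | p \in IB} => extf x (cast_ord H2 (lshift (2 * f) (val q)))].
pose resB' (y : rowT n (~: I)) : rowT n (~: IB) :=
  [ffun q : {p : 'I_(2 * e) | p \in ~: IB} => extf y (cast_ord H2 (lshift (2 * f) (val q)))].
pose resC (x : rowT n I) : rowT n IC :=
  [ffun q : {p : 'I_(2 * f) | p \in IC} => extf x (cast_ord H2 (rshift (2 * e) (val q)))].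
pose resC' (y : rowT n (~: I)) : rowT n (~: IC) :=
  [ffun q : {p : 'I_(2 * f) | p \in ~: IC} => extf y (cast_ord H2 (rshift (2 * e) (val q)))].
have keyL : forall x y, [ffun p : 'I_(2 * e) => glue x y (cast_ord H2 (lshift (2 * f) p))]
    = glue (resB x) (resB' y).
  move=> x y; apply/ffunP => p; rewrite ffunE !glueE /I (IsetL H he hf) -/IB.
  case: ifP => hp; first by rewrite (extfE' _ hp) /resB [in RHS]ffunE.
  have hp' : p \in ~: IB by rewrite finset.in_setC hp.
  by rewrite (extfE' _ hp') /resB'; cbv beta; rewrite [in RHS]ffunE.
have keyR : forall x y, [ffun p : 'I_(2 * f) => glue x y (cast_ord H2 (rshift (2 * e) p))]
    = glue (resC x) (resC' y).
  move=> x y; apply/ffunP => p; rewrite ffunE !glueE /I (IsetR H he hf) -/IC.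
  case: ifP => hp; first by rewrite (extfE' _ hp) /resC [in RHS]ffunE.
  have hp' : p \in ~: IC by rewrite finset.in_setC hp.
  by rewrite (extfE' _ hp') /resC'; cbv beta; rewrite [in RHS]ffunE.
have eX : forall x y, X (glue (resB x) (resB' y)) =
    (col_base MX *m row_base MX) (enum_rank (resB x)) (enum_rank (resB' y)).
  by move=> x y; rewrite mulmx_base /MX Mat_glue !enum_rankK.
have eY : forall x y, Y (glue (resC x) (resC' y)) =
    (col_base MY *m row_base MY) (enum_rank (resC x)) (enum_rank (resC' y)).
  by move=> x y; rewrite mulmx_base /MY Mat_glue !enum_rankK.
have eM : Mat I (~: I) (tprod H2 X Y) = \matrix_(i, j)
   (\sum_(t : 'I_(\rank MX) * 'I_(\rank MY))
     (col_base MX (enum_rank (resB (enum_val i))) t.1 *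
      col_base MY (enum_rank (resC (enum_val i))) t.2) *
     (row_base MX t.1 (enum_rank (resB' (enum_val j))) *
      row_base MY t.2 (enum_rank (resC' (enum_val j)))))%R.
  apply/matrixP => i j; rewrite Mat_glue !mxE ffunE.
  rewrite (_ : [ffun i0 => _] = [ffun p : 'I_(2 * e) => glue (enum_val i) (enum_val j) (cast_ord H2 (lshift (2 * f) p))]); last first.
    by apply/ffunP => p; rewrite !ffunE.
  rewrite keyL.
  rewrite (_ : [ffun j0 => _] = [ffun p : 'I_(2 * f) => glue (enum_val i) (enum_val j) (cast_ord H2 (rshift (2 * e) p))]); last first.
    by apply/ffunP => p; rewrite !ffunE.
  rewrite keyR eX eY !mxE big_distrlr /= pair_bigA /=.
  by apply: eq_bigr => -[u v] _ /=; rewrite mulrACA.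
rewrite eM; apply: leq_trans (rank_factor _ _) _.
by rewrite card_prod !card_ord.
Qed.

End RankProd.

Notation R := Rdefinitions.R.

Section Relrk.
Variables (F : fieldType) (n' : nat).
Local Notation n := n'.+1.

Lemma relrkC d a al b (A : tensor F n (2 * d)) :
  relrk a al b A = (\rank (Mat (Iset a al b) (~: Iset a al b) A))%:R / (n%:R ^+ d).
Proof. by rewrite /relrk JsetC. Qed.

Lemma npos : (0 : R) < n%:R.
Proof. by rewrite ltr0n. Qed.

Lemma npowpos d : (0 : R) < n%:R ^+ d.
Proof. by rewrite exprn_gt0 // npos. Qed.

Lemma relrk_ge0 d a al b (A : tensor F n (2 * d)) : 0 <= relrk a al b A.
Proof. by rewrite /relrk divr_ge0 // ltW // npowpos. Qed.

Lemma card_rowT m (I : {set 'I_m}) : #|{: rowT n I}| = (n ^ #|I|)%N.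
Proof. by rewrite card_ffun card_ord card_sig. Qed.

Lemma rank_Iset_bound d a al b (A : tensor F n (2 * d)) : (0 < d)%N ->
  (\rank (Mat (Iset a al b) (~: Iset a al b) A) <= n ^ (if a == b then d else d.-1))%N.
Proof.
move=> hd.
have hI := card_Iset a al b hd.
have hC := cardsC (Iset a al b); rewrite card_ord hI in hC.
case: a b hI hC => [] [] hI hC; rewrite /= in hI hC *.
- by apply: leq_trans (rank_leq_row _) _; rewrite card_rowT hI; apply: leq_pexp2l => //; lia.
- apply: leq_trans (rank_leq_col _) _; rewrite card_rowT; apply: leq_pexp2l => //. rewrite -(leq_add2l (1 + d.-1 + 1)) hC; lia.
- by apply: leq_trans (rank_leq_row _) _; rewrite card_rowT hI; apply: leq_pexp2l => //; lia.
- by apply: leq_trans (rank_leq_row _) _; rewrite card_rowT hI; apply: leq_pexp2l => //; lia.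
Qed.

Lemma relrk_le1 d a al b (A : tensor F n (2 * d)) : (0 < d)%N -> relrk a al b A <= 1.
Proof.
move=> hd; rewrite relrkC ler_pdivrMr ?npowpos // mul1r -natrX ler_nat.
have hb := @rank_Iset_bound d a al b A hd; apply: (leq_trans hb).
case: (a == b) => //; apply: leq_pexp2l => //; lia.
Qed.

Lemma relrk_le_inv d a al b (A : tensor F n (2 * d)) : (0 < d)%N -> a != b ->
  relrk a al b A <= n%:R^-1.
Proof.
move=> hd hab; rewrite relrkC ler_pdivrMr ?npowpos //.
have -> : n%:R^-1 * n%:R ^+ d = (n ^ d.-1)%:R :> R.
  have e : n%:R ^+ d = n%:R * n%:R ^+ d.-1 :> R by rewrite -exprS prednK.
  by rewrite natrX e mulrA mulVf ?mul1r // lt0r_neq0 // npos.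
rewrite ler_nat; have := @rank_Iset_bound d a al b A hd; by rewrite (negbTE hab).
Qed.

Lemma Mat_add m (I J : {set 'I_m}) (A B : tensor F n m) :
  Mat I J (A + B) = Mat I J A + Mat I J B.
Proof.
apply/matrixP => i j; rewrite !mxE -big_split /=.
by apply: eq_bigr => z _; rewrite ffunE.
Qed.

Lemma Mat0 m (I J : {set 'I_m}) : Mat I J (0 : tensor F n m) = 0.
Proof.
apply/matrixP => i j; rewrite !mxE big1 // => z _; by rewrite ffunE.
Qed.

Lemma relrk_add d a al b (A B : tensor F n (2 * d)) :
  relrk a al b (A + B) <= relrk a al b A + relrk a al b B.
Proof.
rewrite /relrk Mat_add -mulrDl; apply: ler_wpM2r; first by rewrite invr_ge0 ltW ?npowpos.
by rewrite -natrD ler_nat mxrank_add.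
Qed.

Lemma relrk0 d a al b : relrk a al b (0 : tensor F n (2 * d)) = 0.
Proof. by rewrite /relrk Mat0 mxrank0 mul0r. Qed.

Lemma relrk_tprod e f k (H : (e + f)%N = k) (he : (0 < e)%N) (hf : (0 < f)%N)
  (H2 : (2 * e + 2 * f)%N = (2 * k)%N) a b
  (be : {ffun 'I_e.-1 -> bool}) (c : bool) (ga : {ffun 'I_f.-1 -> bool})
  (X : tensor F n (2 * e)) (Y : tensor F n (2 * f)) :
  relrk (d:=k) a (join k be c ga) b (tprod H2 X Y) <=
  relrk (d:=e) a be c X * relrk (d:=f) c ga b Y.
Proof.
rewrite !relrkC.
have -> : n%:R ^+ k = n%:R ^+ e * n%:R ^+ f :> R by rewrite -exprD H.
rewrite mulf_div.
apply: ler_wpM2r; first by rewrite invr_ge0 ltW ?mulr_gt0 ?npowpos.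
by rewrite -natrM ler_nat (rank_tprod H he hf).
Qed.

End Relrk.

Section SumJoin.
Variables (e f k : nat) (H : (e + f)%N = k) (he : (0 < e)%N) (hf : (0 < f)%N).

Lemma sum_join (V : zmodType) c
  (G : {ffun 'I_e.-1 -> bool} -> {ffun 'I_f.-1 -> bool} -> V) :
  \sum_(al : {ffun 'I_k.-1 -> bool} | fn al e.-1 == c) G (splitB e al) (splitC e f al)
  = \sum_be \sum_ga G be ga.
Proof.
rewrite pair_bigA /=.
rewrite (reindex_onto (fun p => join k p.1 c p.2) (fun al => (splitB e al, splitC e f al))); last first.
  by move=> al /eqP hc; rewrite join_split.
apply: eq_big => [[be ga]|[be ga] _] /=.
  rewrite fn_join //; last by lia.
  rewrite ltnn eqxx eqxx /= (splitB_join H he hf) (splitC_join H he hf).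
  by rewrite eqxx.
by rewrite (splitB_join H he hf) (splitC_join H he hf).
Qed.
End SumJoin.

Section Mu.
Variables (F : fieldType) (n' : nat).
Local Notation n := n'.+1.

Definition mu_le k a b (B : tensor F (n * n) k) (r : R) :=
  exists X : {ffun 'I_k.-1 -> bool} -> tensor F n (2 * k),
    unflat B = \sum_al X al /\ \sum_al relrk a al b (X al) <= r.

Lemma mu_mono k a b (B : tensor F (n * n) k) r r' : r <= r' -> mu_le a b B r -> mu_le a b B r'.
Proof. by move=> hr [X [h1 h2]]; exists X; split => //; apply: le_trans hr. Qed.

Lemma mu0 k a b : mu_le a b (0 : tensor F (n * n) k) 0.
Proof.
exists (fun _ => 0); split; first by rewrite unflat0 big1.
by rewrite big1 // => al _; rewrite relrk0.
Qed.

Lemma mu_add k a b (B C : tensor F (n * n) k) r r' :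
  mu_le a b B r -> mu_le a b C r' -> mu_le a b (B + C) (r + r').
Proof.
move=> [X [hX1 hX2]] [Y [hY1 hY2]]; exists (fun al => X al + Y al); split.
  by rewrite unflatD hX1 hY1 big_split.
apply: le_trans (lerD hX2 hY2); rewrite -big_split /=.
by apply: ler_sum => al _; apply: relrk_add.
Qed.

Lemma mu_single k a b (B : tensor F (n * n) k) (al0 : {ffun 'I_k.-1 -> bool}) :
  mu_le a b B (relrk a al0 b (unflat B)).
Proof.
exists (fun al => if al == al0 then unflat B else 0); split.
  by rewrite (bigD1 al0) //= eqxx big1 ?addr0 // => al /negbTE ->.
rewrite (bigD1 al0) //= eqxx big1 ?addr0 // => al /negbTE ->.
by rewrite relrk0.
Qed.

Lemma mu_le1 k a b (B : tensor F (n * n) k) : (0 < k)%N -> mu_le a b B 1.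
Proof.
move=> hk; apply: mu_mono (mu_single a b B [ffun => false]).
exact: relrk_le1.
Qed.

Lemma mu_inv k a b (B : tensor F (n * n) k) : (0 < k)%N -> a != b -> mu_le a b B (n%:R^-1).
Proof.
move=> hk hab; apply: mu_mono (mu_single a b B [ffun => false]).
exact: relrk_le_inv.
Qed.

Lemma mu_prod e f k (H : (e + f)%N = k) (he : (0 < e)%N) (hf : (0 < f)%N) a c b
  (B : tensor F (n * n) e) (C : tensor F (n * n) f) r r' :
  mu_le a c B r -> mu_le c b C r' -> mu_le a b (tprod H B C) (r * r').
Proof.
move=> [X [hX1 hX2]] [Y [hY1 hY2]].
have H2 : (2 * e + 2 * f)%N = (2 * k)%N by rewrite -H mulnDr.
exists (fun al => if fn al e.-1 == c then tprod H2 (X (splitB e al)) (Y (splitC e f al)) else 0).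
split.
  rewrite (unflat_tprod H H2) hX1 hY1 tprod_sum -big_mkcond /=.
  by rewrite (sum_join H he hf c (fun be ga => tprod H2 (X be) (Y ga))).
apply: le_trans (ler_pM (sumr_ge0 _ (fun al _ => relrk_ge0 _ _ _ _))
                        (sumr_ge0 _ (fun al _ => relrk_ge0 _ _ _ _)) hX2 hY2).
rewrite big_distrlr /= -(sum_join H he hf c (fun be ga => relrk a be c (X be) * relrk c ga b (Y ga))).
rewrite [X in _ <= X]big_mkcond /=.
apply: ler_sum => al _; case: ifP => hc; last by rewrite relrk0.
have := relrk_tprod H he hf H2 a b (splitB e al) c (splitC e f al) (X (splitB e al)) (Y (splitC e f al)).
by rewrite (join_split H he hf (eqP hc)).
Qed.

End Mu.

Scheme sm_size_mut := Induction for sm_size Sort Prop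
  with sm_fam_mut := Induction for sm_fam Sort Prop.

Definition Ek (n k : nat) : R := powR (n%:R) (ln (k%:R : R) / ln 2).

Lemma Ek_gt0 n k : (0 < n)%N -> 0 < Ek n k.
Proof. by move=> hn; rewrite /Ek powR_gt0 // ltr0n. Qed.

Lemma Ek1 n : Ek n 1 = 1.
Proof. by rewrite /Ek ln1 mul0r powRr0. Qed.

Lemma Ek_le n e k : (0 < n)%N -> (0 < e)%N -> (0 < k)%N -> (k <= 2 * e)%N ->
  Ek n k <= n%:R * Ek n e.
Proof.
move=> hn he hk hke.
have l2 : (0 : R) < ln 2 by apply: ln_gt0; rewrite ltr1n.
rewrite /Ek.
have -> : n%:R * powR (n%:R : R) (ln (e%:R : R) / ln 2) = powR (n%:R : R) (1 + ln (e%:R : R) / ln 2).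
  rewrite powRD ?powRr1 ?ler0n //.
  by rewrite pnatr_eq0 -lt0n hn implybT.
apply: ler_powR; first by rewrite ler1n.
have hl : ln (k%:R : R) <= ln 2 + ln (e%:R).
  rewrite -lnM ?posrE ?ltr0n //.
  rewrite ler_ln ?posrE ?ltr0n ?mulr_gt0 //.
  by rewrite (_ : (2:R) * e%:R = (2 * e)%:R) ?ler_nat // natrM.
- by rewrite ltr0n.
- by rewrite ler_pdivrMr // mulrDl mul1r divfK // lt0r_neq0.
Qed.

Lemma sm_exists (F : fieldType) N k (B : tensor F N k) : (0 < k)%N -> exists s, sm_size B s.
Proof.
elim: k B => // k IH B _.
case: k IH B => [|k] IH B; first by exists (B != 0); exact: sm_one.
pose H : (1 + k.+1)%N = k.+2 := erefl.
pose de (j : 'I_N) : tensor F N 1 := [ffun x : {ffun 'I_1 -> 'I_N} => ((x ord0 == j)%:R : F)].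
pose Bj (j : 'I_N) : tensor F N k.+1 :=
  [ffun y : {ffun 'I_k.+1 -> 'I_N} => B [ffun p : 'I_k.+2 => match @split 1 k.+1 p with inl _ => j | inr i => y i end]].
have eB : B = \sum_(j <- enum 'I_N) tprod H (de j) (Bj j).
  rewrite big_enum /=; apply/ffunP => x; rewrite sum_ffunE.
  pose x0 := x (cast_ord H (lshift k.+1 ord0)).
  rewrite (bigD1 x0) //= big1 ?addr0; last first.
    by move=> j hj; rewrite !ffunE /= eq_sym (negbTE hj) mul0r.
  rewrite !ffunE /= eqxx mul1r; congr (B _); apply/ffunP => p; rewrite !ffunE.
  case: splitP => [j' /= ej|i /= ei].
    by rewrite /x0; congr (x _); apply/val_inj => /=; rewrite ej (ord1 j').
  by rewrite ffunE; congr (x _); apply/val_inj => /=; rewrite ei.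
have hf : forall s, exists t, sm_fam (\sum_(j <- s) tprod H (de j) (Bj j)) t.
  elim => [|j s [t ht]]; first by exists 0%N; rewrite big_nil; exact: fam_nil.
  have [s1 h1] : exists s1, sm_size (de j) s1 by exists (de j != 0); exact: sm_one.
  have [s2 h2] := IH (Bj j) isT.
  exists (s1 + s2 + t)%N; rewrite big_cons addrC.
  exact: fam_cons.
have [t ht] := hf (enum 'I_N).
by exists t; rewrite eB; apply: sm_many.
Qed.

Lemma ineq (x y p q m : R) : 0 <= x -> x <= y -> 0 < p -> 0 < q -> 0 < m ->
  q <= m * p -> x / p * m^-1 <= y / q.
Proof.
move=> hx hxy hp hq hm hqp.
rewrite -mulrA -invfM (mulrC p m).
apply: (@le_trans _ _ (x / q)).
  apply: ler_wpM2l => //; rewrite lef_pV2 // posrE ?mulr_gt0 //.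
by apply: ler_wpM2r => //; rewrite invr_ge0 ltW.
Qed.

Lemma realmin_le (S : set R) (D : R) : 0 < D ->
  (forall r, S r -> exists m : nat, r = m%:R / D) -> forall r, S r -> realmin S <= r.
Proof.
move=> hD hS r hr.
have ex : exists m, `[< S (m%:R / D) >].
  by have [m hm] := hS r hr; exists m; apply/asboolP; rewrite -hm.
case: (ex_minnP ex) => m0 /asboolP hm0 hmin.
have hx : exists r0, ([set r | S r /\ forall r', S r' -> r <= r'])%classic r0.
  exists (m0%:R / D); split => // r' hr'.
  have [m' em] := hS r' hr'; rewrite em.
  apply: ler_wpM2r; first by rewrite invr_ge0 ltW.
  by rewrite ler_nat; apply: hmin; apply/asboolP; rewrite -em.
have [_ h] := xgetPex 0 hx.
exact: h.
Qed.

Section MainS.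
Variables (F : fieldType) (n' : nat).
Local Notation n := n'.+1.

Lemma main_ind k (B : tensor F (n * n) k) s : sm_size B s ->
  forall a b, mu_le a b B (s%:R / Ek n k).
Proof.
move=> hs.
apply: (sm_size_mut (P := fun k B s _ => forall a b, mu_le a b B (s%:R / Ek n k))
                    (P0 := fun k T s _ => forall a b, mu_le a b T (s%:R / Ek n k))) hs.
- move=> B0 a b; rewrite Ek1 divr1.
  have [->|hB] := eqVneq B0 0.
    by rewrite ?eqxx /=; apply: mu0.
  by rewrite ?hB /=; apply: mu_le1.
- by move=> k0 B0 s0 _ _ IH a b; apply: IH.
- by move=> k0 a b; rewrite mul0r; apply: mu0.
move=> k0 e f H B0 C sB sC T s0 he hf _ IHB _ IHC _ IHT a b.
have hk : (0 < k0)%N by lia.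
have En : 0 < Ek n k0 by apply: Ek_gt0.
rewrite natrD mulrDl [X in mu_le _ _ _ X]addrC; apply: mu_add; first exact: IHT.
have [hfe|hef] := leqP f e.
  apply: mu_mono (mu_prod H he hf (IHB a (~~ b)) (@mu_inv _ _ _ (~~ b) b C hf _)); last by case: b.
  apply: ineq => //; rewrite ?ler0n ?ler_nat ?leq_addr ?Ek_gt0 ?ltr0n //.
  by apply: Ek_le => //; lia.
apply: mu_mono (mu_prod H he hf (@mu_inv _ _ _ a (~~ a) B0 he _) (IHC (~~ a) b)); last by case: a.
rewrite mulrC; apply: ineq => //; rewrite ?ler0n ?ler_nat ?leq_addl ?Ek_gt0 ?ltr0n //.
by apply: Ek_le => //; lia.
Qed.

End MainS.

Theorem theorem4p11 (F : fieldType) (n d : nat) (A : tensor F n (2 * d)) :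
  (1 <= n)%N -> (1 <= d)%N ->
  powR (n%:R : Rdefinitions.R) (ln (d%:R : Rdefinitions.R) / ln 2) * rho A
    <= (Lncsm (flat A))%:R.
Proof.
case: n A => [//|n'] A _ hd.
set L := Lncsm (flat A).
have [s0 hs0] := sm_exists (flat A) hd.
have hL : sm_size (flat A) L.
  have ex : exists m, `[< sm_size (flat A) m >] by exists s0; apply/asboolP.
  case: (ex_minnP ex) => m /asboolP hm hmin.
  have hx : exists m0, ([set m | sm_size (flat A) m /\ forall m', sm_size (flat A) m' -> (m <= m')%N])%classic m0.
    by exists m; split => // m' hm'; apply: hmin; apply/asboolP.
  by have [] := xgetPex 0%N hx.
have En : 0 < Ek n'.+1 d by apply: Ek_gt0.
have key : forall a b, rho_ab a b A <= L%:R / Ek n'.+1 d.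
  move=> a b; have [X [hX1 hX2]] := main_ind hL a b.
  rewrite unflat_flat in hX1.
  apply: le_trans hX2; apply: (@realmin_le _ (n'.+1%:R ^+ d)); first exact: npowpos.
    move=> r [Y [_ ->]]; exists (\sum_al \rank (Mat (Iset a al b) (Jset a al b) (Y al)))%N.
    by rewrite natr_sum mulr_suml.
  by exists X.
rewrite mulrC -ler_pdivlMr //.
rewrite /rho !ge_max.
by rewrite !key.
Qed.
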